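(* Let $A_0\to A_1\to\cdots$ be an $\omega$-chain in $\mathsf{SquaMS}$ with connecting morphisms $a_{k,\ell}$, and let $(C,(c_k)_k)$ be its colimit in $\mathsf{SquaMS}$. Then $(M\otimes C,(M\otimes c_k)_k)$ is the colimit of the chain $M\otimes A_0\to M\otimes A_1\to\cdots$ with connecting morphisms $M\otimes a_{k,\ell}$.
   Context: Let $M_0=\{(r,s)\in[0,1]^2: r\in\{0,1\}\text{ or } s\in\{0,1\}\}$. A square metric space is a pair $(X,S_X)$ with $X$ a metric space with all distances at most $2$ and $S_X\colon M_0\to X$ injective such that (sq1) for $i\in\{0,1\}$, $r,s\in[0,1]$: $d_X(S_X(i,r),S_X(i,s))=|s-r|$ and $d_X(S_X(r,i),S_X(s,i))=|s-r|$; (sq2) $d_X(S_X(r,s),S_X(t,u))\ge|r-t|+|s-u|$. $\mathsf{SquaMS}$: these objects, with short maps $f$ satisfying $f\circ S_X=S_Y$ as morphisms. Let $N=\{0,1,2\}^2$, $M=N\setminus\{(1,1)\}$, also viewed as points of $\mathbb{R}^2$. For $X$ in $\mathsf{SquaMS}$, $M\otimes X=(M\times X)/\!\sim$, where $\sim$ is generated by $(m,S_X(p))\sim(n,S_X(q))$ whenever $m,n\in M$ differ by exactly $1$ in exactly one coordinate and $(m+p)/3=(n+q)/3$; $m\otimes x$ is the class of $(m,x)$. With $d((a,u),(b,v))=\frac13 d_X(u,v)$ if $a=b$ and $2$ otherwise, $M\otimes X$ has the quotient metric (infimum over finite chains of sums of consecutive distances, $\sim$-related consecutive pairs counting $0$).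 $S_{M\otimes X}(p)=m\otimes S_X(3p-m)$ for any $m\in M$ with $p\in(m+[0,1]^2)/3$; $(M\otimes f)(m\otimes x)=m\otimes f(x)$. *)

(* Defs.v *)
From Stdlib Require Import Reals Relations ClassicalEpsilon.
From Coquelicot Require Import Rbar Lub.
Open Scope R_scope.

Definition in_unit (r : R) : Prop := 0 <= r <= 1.

Definition M0 (p : R * R) : Prop :=
  in_unit (fst p) /\ in_unit (snd p) /\
  (fst p = 0 \/ fst p = 1 \/ snd p = 0 \/ snd p = 1).

(* raw data: carrier, distance, and S_X (only its values on M0 matter) *)
Record sqraw := SqRaw {
  car : Type;
  dist : car -> car -> R;
  sqS : R * R -> car }.

Definition is_metric (T : Type) (d : T -> T -> R) : Prop :=
  (forall x y, d x y = 0 <-> x = y) /\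
  (forall x y, d x y = d y x) /\
  (forall x y z, d x z <= d x y + d y z).

Definition is_squams (X : sqraw) : Prop :=
  is_metric (car X) (dist X) /\
  (forall x y, dist X x y <= 2) /\
  (forall p q, M0 p -> M0 q -> sqS X p = sqS X q -> p = q) /\
  (forall i r s, (i = 0 \/ i = 1) -> in_unit r -> in_unit s ->
     dist X (sqS X (i, r)) (sqS X (i, s)) = Rabs (s - r) /\
     dist X (sqS X (r, i)) (sqS X (s, i)) = Rabs (s - r)) /\
  (forall p q, M0 p -> M0 q ->
     dist X (sqS X p) (sqS X q) >= Rabs (fst p - fst q) + Rabs (snd p - snd q)).

Definition is_mor (X Y : sqraw) (f : car X -> car Y) : Prop :=
  (forall x y, dist Y (f x) (f y) <= dist X x y) /\
  (forall p, M0 p -> f (sqS X p) = sqS Y p).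

(* a chain is given by its step maps a_{k,k+1}; a_{k,l} are their composites *)
Definition is_chain (A : nat -> sqraw) (a : forall k, car (A k) -> car (A (S k))) : Prop :=
  (forall k, is_squams (A k)) /\ (forall k, is_mor (A k) (A (S k)) (a k)).

Definition is_colimit (A : nat -> sqraw) (a : forall k, car (A k) -> car (A (S k)))
    (C : sqraw) (c : forall k, car (A k) -> car C) : Prop :=
  is_squams C /\
  (forall k, is_mor (A k) C (c k)) /\
  (forall k x, c (S k) (a k x) = c k x) /\
  (forall (Y : sqraw) (g : forall k, car (A k) -> car Y),
     is_squams Y ->
     (forall k, is_mor (A k) Y (g k)) ->
     (forall k x, g (S k) (a k x) = g k x) ->
     exists! u : car C -> car Y,
       is_mor C Y u /\ (forall k x, u (c k x) = g k x)).

(* ---------- the index set M = {0,1,2}^2 \ {(1,1)} ---------- *)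
Inductive Mpt : Type := m00 | m01 | m02 | m10 | m12 | m20 | m21 | m22.

Definition Mpt_eq_dec (m n : Mpt) : {m = n} + {m <> n}.
Proof. decide equality. Defined.

Definition mx (m : Mpt) : R :=
  match m with m00 | m01 | m02 => 0 | m10 | m12 => 1 | m20 | m21 | m22 => 2 end.
Definition my (m : Mpt) : R :=
  match m with m00 | m10 | m20 => 0 | m01 | m21 => 1 | m02 | m12 | m22 => 2 end.

Definition adjacent (m n : Mpt) : Prop :=
  (Rabs (mx m - mx n) = 1 /\ my m = my n) \/
  (mx m = mx n /\ Rabs (my m - my n) = 1).

Definition gen (X : sqraw) (z w : Mpt * car X) : Prop :=
  exists p q, M0 p /\ M0 q /\ snd z = sqS X p /\ snd w = sqS X q /\
    adjacent (fst z) (fst w) /\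
    (mx (fst z) + fst p) / 3 = (mx (fst w) + fst q) / 3 /\
    (my (fst z) + snd p) / 3 = (my (fst w) + snd q) / 3.

Definition teq (X : sqraw) : relation (Mpt * car X) :=
  clos_refl_sym_trans _ (gen X).

Definition Tcar (X : sqraw) : Type :=
  { P : Mpt * car X -> Prop | exists z, P = teq X z }.

Definition tcls (X : sqraw) (z : Mpt * car X) : Tcar X :=
  exist _ (teq X z) (ex_intro _ z eq_refl).

Definition d0 (X : sqraw) (z w : Mpt * car X) : R :=
  if Mpt_eq_dec (fst z) (fst w) then dist X (snd z) (snd w) / 3 else 2.

Inductive chain_cost (X : sqraw) : Mpt * car X -> Mpt * car X -> R -> Prop :=
| ch_nil z : chain_cost X z z 0
| ch_dist z w y r : chain_cost X w y r -> chain_cost X z y (d0 X z w + r)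
| ch_glue z w y r : teq X z w -> chain_cost X w y r -> chain_cost X z y r.

Definition tdist (X : sqraw) (x y : Tcar X) : R :=
  real (Glb_Rbar (fun r => exists z w,
          proj1_sig x z /\ proj1_sig y w /\ chain_cost X z w r)).

Definition cell (m : Mpt) (p : R * R) : Prop :=
  mx m <= 3 * fst p <= mx m + 1 /\ my m <= 3 * snd p <= my m + 1.

(* any m with p in (m+[0,1]^2)/3 (well-definedness is part of the paper) *)
Definition pick_cell (p : R * R) : Mpt := epsilon (inhabits m00) (fun m => cell m p).

Definition tS (X : sqraw) (p : R * R) : Tcar X :=
  let m := pick_cell p in
  tcls X (m, sqS X (3 * fst p - mx m, 3 * snd p - my m)).

Definition Mtens (X : sqraw) : sqraw := SqRaw (Tcar X) (tdist X) (tS X).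

Definition tinh (X : sqraw) (x : Tcar X) : inhabited (Mpt * car X) :=
  match proj2_sig x with ex_intro z _ => inhabits z end.
Definition trep (X : sqraw) (x : Tcar X) : Mpt * car X :=
  epsilon (tinh X x) (fun z => proj1_sig x z).

Definition Mtens_map (X Y : sqraw) (f : car X -> car Y) (x : Tcar X) : Tcar Y :=
  let z := trep X x in tcls Y (fst z, f (snd z)).

(* Main.v *)
Require Import Defs.
From Stdlib Require Import Reals Lra Lia Relations ClassicalEpsilon Classical FunctionalExtensionality PropExtensionality ProofIrrelevance.
From Stdlib Require Rtopology.
From Coquelicot Require Import Rbar Lub.
Open Scope R_scope.

Ltac rabs := unfold Rabs in *; repeat match goal with
  | H: context [Rcase_abs ?x] |- _ => destruct (Rcase_abs x)
  | |- context [Rcase_abs ?x] => destruct (Rcase_abs x) end; try lra.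

Lemma glb_le (E : R -> Prop) r : E r -> (forall s, E s -> 0 <= s) -> real (Glb_Rbar E) <= r.
Proof.
  intros Er H0. destruct (Glb_Rbar_correct E) as [Hlb Hglb].
  assert (H1 := Hlb r Er). assert (H2 := Hglb (Finite 0) (fun s Es => H0 s Es)).
  revert H1 H2. destruct (Glb_Rbar E); simpl; intros; lra || contradiction.
Qed.

Lemma glb_ge (E : R -> Prop) r L : E r -> (forall s, E s -> 0 <= s) ->
  (forall s, E s -> L <= s) -> L <= real (Glb_Rbar E).
Proof.
  intros Er H0 HL. destruct (Glb_Rbar_correct E) as [Hlb Hglb].
  assert (H1 := Hlb r Er). assert (H2 := Hglb (Finite L) (fun s Es => HL s Es)).
  revert H1 H2. destruct (Glb_Rbar E); simpl; intros; lra || contradiction.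
Qed.

Lemma glb_nonneg (E : R -> Prop) r : E r -> (forall s, E s -> 0 <= s) -> 0 <= real (Glb_Rbar E).
Proof. intros; eapply glb_ge; eauto. Qed.

Section Basic.
Variable X : sqraw.
Hypothesis HX : is_squams X.

Lemma d_refl x : Defs.dist X x x = 0.
Proof. destruct HX as [[H _] _]. apply H; auto. Qed.
Lemma d_sym x y : Defs.dist X x y = Defs.dist X y x.
Proof. destruct HX as [[_ [H _]] _]. auto. Qed.
Lemma d_tri x y z : Defs.dist X x z <= Defs.dist X x y + Defs.dist X y z.
Proof. destruct HX as [[_ [_ H]] _]. auto. Qed.
Lemma d_eq0 x y : Defs.dist X x y = 0 -> x = y.
Proof. destruct HX as [[H _] _]. apply H. Qed.
Lemma d_nonneg x y : 0 <= Defs.dist X x y.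
Proof. pose proof (d_tri x y x). rewrite d_refl, (d_sym y x) in H. lra. Qed.
Lemma d_le2 x y : Defs.dist X x y <= 2.
Proof. destruct HX as [_ [H _]]. auto. Qed.
Lemma S_inj p q : M0 p -> M0 q -> sqS X p = sqS X q -> p = q.
Proof. destruct HX as [_ [_ [H _]]]. auto. Qed.
Lemma sq1v i r s : (i = 0 \/ i = 1) -> in_unit r -> in_unit s ->
  Defs.dist X (sqS X (i, r)) (sqS X (i, s)) = Rabs (s - r).
Proof. destruct HX as [_ [_ [_ [H _]]]]. intros; apply H; auto. Qed.
Lemma sq1h i r s : (i = 0 \/ i = 1) -> in_unit r -> in_unit s ->
  Defs.dist X (sqS X (r, i)) (sqS X (s, i)) = Rabs (s - r).
Proof. destruct HX as [_ [_ [_ [H _]]]]. intros; apply H; auto. Qed.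
Lemma sq2 p q : M0 p -> M0 q ->
  Defs.dist X (sqS X p) (sqS X q) >= Rabs (fst p - fst q) + Rabs (snd p - snd q).
Proof. destruct HX as [_ [_ [_ [_ H]]]]. auto. Qed.

Lemma d0_sym z w : d0 X z w = d0 X w z.
Proof.
  unfold d0. destruct (Mpt_eq_dec (fst z) (fst w)), (Mpt_eq_dec (fst w) (fst z)); try congruence.
  rewrite d_sym; auto.
Qed.
Lemma d0_nonneg z w : 0 <= d0 X z w.
Proof. unfold d0. destruct (Mpt_eq_dec _ _). pose proof (d_nonneg (snd z) (snd w)); lra. lra. Qed.
Lemma d0_le2 z w : d0 X z w <= 2.
Proof. unfold d0. destruct (Mpt_eq_dec _ _). pose proof (d_le2 (snd z) (snd w)); lra. lra. Qed.

Lemma chain_conv z y r r' : chain_cost X z y r -> r = r' -> chain_cost X z y r'.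
Proof. intros; subst; auto. Qed.

Lemma chain_app z w r1 : chain_cost X z w r1 -> forall y r2, chain_cost X w y r2 -> chain_cost X z y (r1 + r2).
Proof.
  induction 1; intros.
  - eapply chain_conv; eauto; lra.
  - eapply chain_conv. apply ch_dist. apply IHchain_cost; eauto. lra.
  - apply ch_glue with w; auto.
Qed.

Lemma chain_rev z y r : chain_cost X z y r -> chain_cost X y z r.
Proof.
  induction 1.
  - apply ch_nil.
  - eapply chain_conv. apply (chain_app _ _ _ IHchain_cost _ _ (ch_dist X w z z 0 (ch_nil X z))).
    rewrite d0_sym; lra.
  - eapply chain_conv. apply (chain_app _ _ _ IHchain_cost _ _ (ch_glue X w z z 0 (rst_sym _ _ _ _ H) (ch_nil X z))). lra.
Qed.

Lemma chain_nonneg z y r : chain_cost X z y r -> 0 <= r.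
Proof. induction 1; auto; try lra. pose proof (d0_nonneg z w); lra. Qed.

End Basic.

Definition gx m (p:R*R) := (mx m + fst p)/3.
Definition gy m (p:R*R) := (my m + snd p)/3.
Definition Sform X (z w : Mpt * car X) := exists p q, M0 p /\ M0 q /\ snd z = sqS X p /\ snd w = sqS X q /\
   gx (fst z) p = gx (fst w) q /\ gy (fst z) p = gy (fst w) q.

Lemma teq_char X : is_squams X -> forall z w, teq X z w -> z = w \/ Sform X z w.
Proof.
  intros HX z w H. induction H as [x y H|x|x y H IH|x y z T1 IH1 T2 IH2].
  - right. destruct H as (p&q&H1&H2&H3&H4&_&H5&H6). exists p, q; unfold gx, gy; tauto.
  - left; auto.
  - destruct IH as [->|(p&q&H1&H2&H3&H4&H5&H6)]. left; auto.
    right. exists q, p. refine (conj H2 (conj H1 (conj H4 (conj H3 (conj (eq_sym H5) (eq_sym H6)))))).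
  - destruct IH1 as [->|(p&q&H1&H2&H3&H4&H5&H6)]. auto.
    destruct IH2 as [<-|(p'&q'&H1'&H2'&H3'&H4'&H5'&H6')].
    right; exists p, q; tauto.
    assert (q = p'). { apply (S_inj X HX); auto. congruence. } subst p'.
    right. exists p, q'. refine (conj H1 (conj H2' (conj H3 (conj H4' (conj _ _))))); congruence.
Qed.

Lemma Rabs_pm1 x : x = 1 \/ x = -1 -> Rabs x = 1.
Proof. intros [->| ->]; rabs. Qed.

Lemma gen_mk X m n p q : M0 p -> M0 q -> adjacent m n -> gx m p = gx n q -> gy m p = gy n q ->
  gen X (m, sqS X p) (n, sqS X q).
Proof. intros. exists p, q. unfold gx, gy in *. simpl. tauto. Qed.

Ltac m0tac := unfold M0, in_unit; simpl; repeat split; try lra;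
  first [left; lra | right; left; lra | right; right; left; lra | right; right; right; lra].
Ltac adjtac := unfold adjacent; simpl; first
  [ left; split; [apply Rabs_pm1; first [left; lra | right; lra] | lra]
  | right; split; [lra | apply Rabs_pm1; first [left; lra | right; lra]]].
Ltac gentac := apply gen_mk; [m0tac | m0tac | adjtac | unfold gx; simpl; lra | unfold gy; simpl; lra].
Ltac trydiag X r k := apply (rst_trans _ _ _ (k, sqS X r)); apply rst_step; gentac.
Ltac diagtac X p1 p2 q1 q2 := first [ solve [trydiag X (p1,q2) m00] | solve [trydiag X (q1,p2) m00] | solve [trydiag X (p1,q2) m01] | solve [trydiag X (q1,p2) m01] | solve [trydiag X (p1,q2) m02] | solve [trydiag X (q1,p2) m02] | solve [trydiag X (p1,q2) m10] | solve [trydiag X (q1,p2) m10] | solve [trydiag X (p1,q2) m12] | solve [trydiag X (q1,p2) m12] | solve [trydiag X (p1,q2) m20] | solve [trydiag X (q1,p2) m20] | solve [trydiag X (p1,q2) m21] | solve [trydiag X (q1,p2) m21] | solve [trydiag X (p1,q2) m22] | solve [trydiag X (q1,p2) m22] ].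

Lemma teq_of_glob X m n p q : M0 p -> M0 q -> gx m p = gx n q -> gy m p = gy n q ->
  teq X (m, sqS X p) (n, sqS X q).
Proof.
  destruct p as [p1 p2], q as [q1 q2]. intros Hp Hq E1 E2.
  pose proof Hp as Hp'. pose proof Hq as Hq'.
  unfold M0, in_unit in Hp', Hq'; simpl in *. unfold gx, gy in *; simpl in *.
  destruct Hp' as [[? ?] [[? ?] _]], Hq' as [[? ?] [[? ?] _]].
  unfold teq.
  destruct m, n; simpl in E1, E2;
  first [ lra
        | (assert (p1 = q1) by lra; assert (p2 = q2) by lra; subst; apply rst_refl)
        | solve [apply rst_step; gentac]
        | diagtac X p1 p2 q1 q2 ].
Qed.

Section Cls.
Variable X : sqraw.
Hypothesis HX : is_squams X.

Lemma teq_sym z w : teq X z w -> teq X w z.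
Proof. apply rst_sym. Qed.
Lemma teq_trans z w y : teq X z w -> teq X w y -> teq X z y.
Proof. apply rst_trans. Qed.
Lemma teq_refl z : teq X z z.
Proof. apply rst_refl. Qed.

Lemma cls_mem (x : Tcar X) : exists z, proj1_sig x z.
Proof. destruct x as [P [z0 ->]]. exists z0. apply teq_refl. Qed.

Lemma cls_same (x : Tcar X) z z' : proj1_sig x z -> proj1_sig x z' -> teq X z z'.
Proof. destruct x as [P [z0 ->]]. simpl. intros. eapply teq_trans; [apply teq_sym|]; eauto. Qed.

Lemma sig_eq (T : Type) (P Q : T -> Prop) (F : (T -> Prop) -> Prop) hp hq :
  P = Q -> exist F P hp = exist F Q hq.
Proof. intros; subst. f_equal. apply proof_irrelevance. Qed.

Lemma tcls_eq z w : teq X z w -> tcls X z = tcls X w.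
Proof.
  intros H. unfold tcls. apply sig_eq. apply functional_extensionality. intros y.
  apply propositional_extensionality. split; intros.
  eapply teq_trans; [apply teq_sym|]; eauto. eapply teq_trans; eauto.
Qed.

Lemma cls_eq (x : Tcar X) z : proj1_sig x z -> x = tcls X z.
Proof.
  intros H. destruct x as [P [z0 E]]. pose proof E as E'. subst P. simpl in H.
  transitivity (tcls X z0). unfold tcls. apply sig_eq. auto. apply tcls_eq; auto.
Qed.

Lemma tcls_inv z w : tcls X z = tcls X w -> teq X z w.
Proof.
  intros H. assert (proj1_sig (tcls X w) w) by apply teq_refl.
  rewrite <- H in H0. exact H0.
Qed.

Lemma tcls_mem z : proj1_sig (tcls X z) z.
Proof. apply teq_refl. Qed.

Definition Eset (x y : Tcar X) := fun r => exists z w, proj1_sig x z /\ proj1_sig y w /\ chain_cost X z w r.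

Lemma E_nonneg x y s : Eset x y s -> 0 <= s.
Proof. intros (z&w&_&_&H). eapply chain_nonneg; eauto. Qed.

Lemma E_inhab x y : exists r, Eset x y r.
Proof.
  destruct (cls_mem x) as [z Hz], (cls_mem y) as [w Hw].
  exists (d0 X z w + 0). exists z, w. repeat split; auto. apply ch_dist. apply ch_nil.
Qed.

Lemma tdist_le x y z w r : proj1_sig x z -> proj1_sig y w -> chain_cost X z w r -> tdist X x y <= r.
Proof.
  intros. unfold tdist. apply glb_le. exists z, w; auto. apply E_nonneg.
Qed.

Lemma tdist_ge x y L : (forall z w r, proj1_sig x z -> proj1_sig y w -> chain_cost X z w r -> L <= r) ->
  L <= tdist X x y.
Proof.
  intros H. unfold tdist. destruct (E_inhab x y) as [r0 Hr0].
  apply glb_ge with r0; auto. apply E_nonneg. intros s (z&w&?&?&?). eauto.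
Qed.

Lemma tdist_nonneg x y : 0 <= tdist X x y.
Proof. apply tdist_ge. intros; eapply chain_nonneg; eauto. Qed.

Lemma tdist_sym x y : tdist X x y = tdist X y x.
Proof.
  assert (forall x y, tdist X y x <= tdist X x y).
  { intros x0 y0. apply tdist_ge. intros z w r Hz Hw Hc. eapply tdist_le; eauto.
    apply chain_rev; auto. }
  apply Rle_antisym; auto.
Qed.

Lemma tdist_tri x y z : tdist X x z <= tdist X x y + tdist X y z.
Proof.
  assert (H1 : forall r1 r2, Eset x y r1 -> Eset y z r2 -> tdist X x z <= r1 + r2).
  { intros r1 r2 (z1&w1&A1&B1&C1) (z2&w2&A2&B2&C2).
    eapply tdist_le; eauto. eapply chain_app; eauto. apply ch_glue with z2; auto.
    eapply cls_same; eauto. }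
  assert (H2 : forall r2, Eset y z r2 -> tdist X x z - r2 <= tdist X x y).
  { intros r2 Hr2. apply tdist_ge. intros z0 w r Ha Hb Hc. assert (He : Eset x y r) by (exists z0, w; auto).
    specialize (H1 _ _ He Hr2). lra. }
  assert (tdist X x z - tdist X x y <= tdist X y z).
  { apply tdist_ge. intros z0 w r Ha Hb Hc. assert (He : Eset y z r) by (exists z0, w; auto).
    specialize (H2 _ He). lra. }
  lra.
Qed.

Lemma tdist_refl x : tdist X x x = 0.
Proof.
  apply Rle_antisym; [|apply tdist_nonneg].
  destruct (cls_mem x) as [z Hz]. eapply tdist_le; eauto. apply ch_nil.
Qed.

Lemma tdist_le2 x y : tdist X x y <= 2.
Proof.
  destruct (cls_mem x) as [z Hz], (cls_mem y) as [w Hw].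
  eapply Rle_trans. eapply tdist_le; eauto. apply ch_dist, ch_nil.
  pose proof (d0_le2 X HX z w). lra.
Qed.

Lemma tdist_cell m u v : tdist X (tcls X (m, u)) (tcls X (m, v)) <= Defs.dist X u v / 3.
Proof.
  eapply Rle_trans. eapply tdist_le; try apply tcls_mem. apply ch_dist, ch_nil.
  unfold d0; simpl. destruct (Mpt_eq_dec m m); [lra|congruence].
Qed.

End Cls.

Lemma mx_range m : 0 <= mx m <= 2.
Proof. destruct m; simpl; lra. Qed.
Lemma my_range m : 0 <= my m <= 2.
Proof. destruct m; simpl; lra. Qed.

Lemma M0_unit p : M0 p -> 0 <= fst p <= 1 /\ 0 <= snd p <= 1.
Proof. intros [H1 [H2 _]]. split; auto. Qed.

Lemma glob_range m p : M0 p -> 0 <= gx m p <= 1 /\ 0 <= gy m p <= 1.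
Proof.
  intros H. apply M0_unit in H. pose proof (mx_range m). pose proof (my_range m).
  unfold gx, gy. lra.
Qed.

Lemma S_char X (HX : is_squams X) m p z : M0 p -> proj1_sig (tcls X (m, sqS X p)) z ->
  exists m' p', M0 p' /\ z = (m', sqS X p') /\ gx m' p' = gx m p /\ gy m' p' = gy m p.
Proof.
  intros Hp H. simpl in H. destruct (teq_char X HX _ _ H) as [<-|(p1&q1&H1&H2&H3&H4&H5&H6)].
  - exists m, p; auto.
  - simpl in *. assert (p = p1) by (apply (S_inj X HX); auto). subst p1.
    exists (fst z), q1. split; auto. split. destruct z; simpl in *; congruence. split; auto.
Qed.

Section Psi.
Variable X : sqraw.
Hypothesis HX : is_squams X.
Variables a b K : R.
Hypothesis Ha : a = 1 \/ a = -1.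
Hypothesis Hb : b = 1 \/ b = -1.
Hypothesis HK1 : forall g1 g2, 0 <= g1 <= 1 -> 0 <= g2 <= 1 -> a * g1 + b * g2 <= K.
Hypothesis HK2 : forall g1 g2, 0 <= g1 <= 1 -> 0 <= g2 <= 1 -> K <= 2 + a * g1 + b * g2.

Definition psi m p := a * gx m p + b * gy m p.

Lemma psi_lip m p0 p : M0 p0 -> M0 p -> psi m p0 <= psi m p + Defs.dist X (sqS X p0) (sqS X p) / 3.
Proof.
  intros H0 H. pose proof (sq2 X HX p0 p H0 H). unfold psi, gx, gy.
  destruct Ha as [-> | ->], Hb as [-> | ->]; rabs.
Qed.

Lemma psi_claim z y r : chain_cost X z y r -> forall n q, M0 q -> y = (n, sqS X q) ->
  forall p, M0 p -> psi n q <= r + psi (fst z) p + Defs.dist X (snd z) (sqS X p) / 3.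
Proof.
  induction 1 as [z|z w y r H IH|z w y r T H IH]; intros n q Hq Ey p Hp.
  - subst z. simpl. pose proof (psi_lip n q p Hq Hp). lra.
  - specialize (IH n q Hq Ey). unfold d0. destruct (Mpt_eq_dec (fst z) (fst w)) as [e|ne].
    + specialize (IH p Hp). rewrite e. pose proof (d_tri X HX (snd w) (snd z) (sqS X p)).
      rewrite (d_sym X HX (snd w) (snd z)) in H0. lra.
    + pose proof (chain_nonneg X HX _ _ _ H). pose proof (d_nonneg X HX (snd z) (sqS X p)).
      destruct (glob_range n q Hq) as [G1 G2], (glob_range (fst z) p Hp) as [G3 G4].
      pose proof (HK1 _ _ G1 G2). pose proof (HK2 _ _ G3 G4). unfold psi. lra.
  - destruct (teq_char X HX _ _ T) as [<-|(p0&p0'&H1&H2&H3&H4&H5&H6)]. auto.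
    specialize (IH n q Hq Ey p0' H2). rewrite H4, d_refl in IH by auto.
    pose proof (psi_lip (fst z) p0 p H1 Hp). rewrite H3.
    unfold psi in *. rewrite <- H5, <- H6 in IH. lra.
Qed.
End Psi.

Lemma lower_S X (HX : is_squams X) m p n q : M0 p -> M0 q ->
  Rabs (gx m p - gx n q) + Rabs (gy m p - gy n q) <= tdist X (tcls X (m, sqS X p)) (tcls X (n, sqS X q)).
Proof.
  intros Hp Hq. apply tdist_ge; auto. intros z w r Hz Hw Hc.
  destruct (S_char X HX m p z Hp Hz) as (m'&p'&Hp'&->&E1&E2).
  destruct (S_char X HX n q w Hq Hw) as (n'&q'&Hq'&->&E3&E4).
  assert (forall a b K, (a = 1 \/ a = -1) -> (b = 1 \/ b = -1) ->
    (forall g1 g2, 0 <= g1 <= 1 -> 0 <= g2 <= 1 -> a * g1 + b * g2 <= K) ->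
    (forall g1 g2, 0 <= g1 <= 1 -> 0 <= g2 <= 1 -> K <= 2 + a * g1 + b * g2) ->
    a * gx n q + b * gy n q <= r + a * gx m p + b * gy m p).
  { intros a b K Ha Hb H1 H2. pose proof (psi_claim X HX a b K Ha Hb H1 H2 _ _ _ Hc n' q' Hq' eq_refl p' Hp').
    simpl in H. rewrite d_refl in H by auto. unfold psi in H. rewrite E1, E2, E3, E4 in H. lra. }
  pose proof (H 1 1 2). pose proof (H 1 (-1) 1). pose proof (H (-1) 1 1). pose proof (H (-1) (-1) 0).
  assert (a1 : 1 = 1 \/ 1 = -1) by lra. assert (a2 : -1 = 1 \/ -1 = -1) by lra.
  specialize (H0 a1 a1). specialize (H1 a1 a2). specialize (H2 a2 a1). specialize (H3 a2 a2).
  assert (1 * gx n q + 1 * gy n q <= r + 1 * gx m p + 1 * gy m p) by (apply H0; intros; lra).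
  assert (1 * gx n q + -1 * gy n q <= r + 1 * gx m p + -1 * gy m p) by (apply H1; intros; lra).
  assert (-1 * gx n q + 1 * gy n q <= r + -1 * gx m p + 1 * gy m p) by (apply H2; intros; lra).
  assert (-1 * gx n q + -1 * gy n q <= r + -1 * gx m p + -1 * gy m p) by (apply H3; intros; lra).
  rabs.
Qed.

Section Lip.
Variable X : sqraw.
Hypothesis HX : is_squams X.
Variable phi : Mpt * car X -> R.
Hypothesis Hgen : forall z w, gen X z w -> phi z = phi w.
Hypothesis Hd0 : forall z w, phi w - phi z <= d0 X z w.

Lemma lip_teq z w : teq X z w -> phi z = phi w.
Proof. induction 1; auto; congruence. Qed.

Lemma lip_chain z y r : chain_cost X z y r -> phi y - phi z <= r.
Proof.
  induction 1. lra. pose proof (Hd0 z w). lra. apply lip_teq in H. lra.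
Qed.

Lemma lip_tdist x y z w : proj1_sig x z -> proj1_sig y w -> phi w - phi z <= tdist X x y.
Proof.
  intros Hz Hw. apply tdist_ge; auto. intros z' w' r Hz' Hw' Hc.
  rewrite (lip_teq _ _ (cls_same X x z z' Hz Hz')), (lip_teq _ _ (cls_same X y w w' Hw Hw')).
  eapply lip_chain; eauto.
Qed.
End Lip.

Lemma lower_nonS X (HX : is_squams X) m x0 delta : 0 < delta ->
  (forall p, M0 p -> delta <= Defs.dist X x0 (sqS X p)) ->
  forall n y0, (n <> m \/ y0 <> x0) -> 0 < tdist X (tcls X (m, x0)) (tcls X (n, y0)).
Proof.
  intros Hd Hp n y0 Hne.
  set (phi := fun z : Mpt * car X => if Mpt_eq_dec (fst z) m then Rmin (Defs.dist X x0 (snd z)) delta / 3 else delta / 3).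
  assert (Hd2 : delta <= 2).
  { assert (M0 (0,0)) by (unfold M0, in_unit; simpl; lra). pose proof (Hp _ H). pose proof (d_le2 X HX x0 (sqS X (0,0))). lra. }
  assert (Hg : forall z w, gen X z w -> phi z = phi w).
  { intros z w (p&q&Hp1&Hq1&E1&E2&_). unfold phi. rewrite E1, E2.
    pose proof (Hp _ Hp1). pose proof (Hp _ Hq1).
    destruct (Mpt_eq_dec (fst z) m), (Mpt_eq_dec (fst w) m); unfold Rmin;
    repeat destruct (Rle_dec _ _); lra. }
  assert (Hl : forall z w, phi w - phi z <= d0 X z w).
  { intros z w. unfold phi, d0. pose proof (d_tri X HX x0 (snd z) (snd w)).
    pose proof (d_tri X HX x0 (snd w) (snd z)). rewrite (d_sym X HX (snd w) (snd z)) in H0.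
    pose proof (d_nonneg X HX x0 (snd z)). pose proof (d_nonneg X HX x0 (snd w)).
    pose proof (d_nonneg X HX (snd z) (snd w)).
    destruct (Mpt_eq_dec (fst z) (fst w)) as [e|ne].
    - rewrite e. destruct (Mpt_eq_dec (fst w) m); unfold Rmin; repeat destruct (Rle_dec _ _); lra.
    - destruct (Mpt_eq_dec (fst z) m), (Mpt_eq_dec (fst w) m); unfold Rmin; repeat destruct (Rle_dec _ _); lra. }
  pose proof (lip_tdist X HX phi Hg Hl _ _ _ _ (tcls_mem X (m, x0)) (tcls_mem X (n, y0))).
  unfold phi in H; simpl in H. rewrite d_refl in H by auto.
  destruct (Mpt_eq_dec m m); [|congruence].
  destruct (Mpt_eq_dec n m).
  - subst n. destruct Hne as [|Hne]; [congruence|].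
    assert (Defs.dist X x0 y0 <> 0) by (intro E; apply Hne; symmetry; apply (d_eq0 X HX); auto).
    pose proof (d_nonneg X HX x0 y0).
    unfold Rmin in *; repeat destruct (Rle_dec _ _); lra.
  - unfold Rmin in *; repeat destruct (Rle_dec _ _); lra.
Qed.

Lemma lip_cont (f : R -> R) c : (forall t t', Rabs (f t - f t') <= Rabs (t - t')) -> continuity_pt f c.
Proof.
  intros H. unfold continuity_pt, continue_in, limit1_in, limit_in. intros eps Heps.
  exists eps. split; auto. intros x [_ Hx]. simpl in *. unfold R_dist in *.
  eapply Rle_lt_trans; [apply H|]; auto.
Qed.

Definition clamp t := Rmax 0 (Rmin 1 t).
Lemma clamp_id t : 0 <= t <= 1 -> clamp t = t.
Proof. intros. unfold clamp, Rmax, Rmin. repeat destruct (Rle_dec _ _); lra. Qed.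
Lemma clamp_range t : 0 <= clamp t <= 1.
Proof. unfold clamp, Rmax, Rmin. repeat destruct (Rle_dec _ _); lra. Qed.
Lemma clamp_lip t t' : Rabs (clamp t - clamp t') <= Rabs (t - t').
Proof. unfold clamp, Rmax, Rmin. repeat destruct (Rle_dec _ _); rabs. Qed.

Lemma edge_delta X (HX : is_squams X) x0 (e : R -> R * R) :
  (forall t, 0 <= t <= 1 -> M0 (e t)) ->
  (forall t t', 0 <= t <= 1 -> 0 <= t' <= 1 -> Defs.dist X (sqS X (e t)) (sqS X (e t')) <= Rabs (t - t')) ->
  (forall p, M0 p -> x0 <> sqS X p) ->
  exists delta, 0 < delta /\ forall t, 0 <= t <= 1 -> delta <= Defs.dist X x0 (sqS X (e t)).
Proof.
  intros He Hl Hn.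
  set (f := fun t => Defs.dist X x0 (sqS X (e (clamp t)))).
  assert (Hf : forall t t', Rabs (f t - f t') <= Rabs (t - t')).
  { intros t t'. unfold f. pose proof (d_tri X HX x0 (sqS X (e (clamp t'))) (sqS X (e (clamp t)))).
    pose proof (d_tri X HX x0 (sqS X (e (clamp t))) (sqS X (e (clamp t')))).
    pose proof (Hl _ _ (clamp_range t) (clamp_range t')).
    rewrite (d_sym X HX (sqS X (e (clamp t'))) (sqS X (e (clamp t)))) in H.
    pose proof (clamp_lip t t'). rabs. }
  destruct (Rtopology.continuity_ab_min f 0 1) as [tm [Hm Hr]]. lra. intros; apply lip_cont; auto.
  exists (f tm). split.
  - unfold f. rewrite clamp_id by auto. pose proof (d_nonneg X HX x0 (sqS X (e tm))).
    destruct (Req_dec (Defs.dist X x0 (sqS X (e tm))) 0). exfalso. apply (Hn (e tm)); auto.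
    apply (d_eq0 X HX); auto. lra.
  - intros t Ht. specialize (Hm t Ht). unfold f in Hm. rewrite (clamp_id t Ht) in Hm. exact Hm.
Qed.

Lemma inunit01 i : (i = 0 \/ i = 1) -> in_unit i.
Proof. unfold in_unit; lra. Qed.

Lemma compact_delta X (HX : is_squams X) x0 : (forall p, M0 p -> x0 <> sqS X p) ->
  exists delta, 0 < delta /\ forall p, M0 p -> delta <= Defs.dist X x0 (sqS X p).
Proof.
  intros Hn.
  assert (HV : forall i, (i = 0 \/ i = 1) -> exists d, 0 < d /\ forall t, 0 <= t <= 1 -> d <= Defs.dist X x0 (sqS X (i, t))).
  { intros i Hi. apply (edge_delta X HX x0 (fun t => (i, t))); auto.
    - intros t Ht. unfold M0, in_unit; simpl. lra.
    - intros t t' Ht Ht'. rewrite (sq1v X HX) by (auto; apply inunit01 || (unfold in_unit; lra)).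
      rewrite Rabs_minus_sym. lra. }
  assert (HH : forall i, (i = 0 \/ i = 1) -> exists d, 0 < d /\ forall t, 0 <= t <= 1 -> d <= Defs.dist X x0 (sqS X (t, i))).
  { intros i Hi. apply (edge_delta X HX x0 (fun t => (t, i))); auto.
    - intros t Ht. unfold M0, in_unit; simpl. lra.
    - intros t t' Ht Ht'. rewrite (sq1h X HX) by (auto; apply inunit01 || (unfold in_unit; lra)).
      rewrite Rabs_minus_sym. lra. }
  destruct (HV 0) as [d1 [P1 Q1]]; [lra|]. destruct (HV 1) as [d2 [P2 Q2]]; [lra|].
  destruct (HH 0) as [d3 [P3 Q3]]; [lra|]. destruct (HH 1) as [d4 [P4 Q4]]; [lra|].
  exists (Rmin (Rmin d1 d2) (Rmin d3 d4)). split.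
  - unfold Rmin; repeat destruct (Rle_dec _ _); lra.
  - intros [p1 p2] Hp. unfold M0, in_unit in Hp; simpl in Hp.
    destruct Hp as [Hp1 [Hp2 [E|[E|[E|E]]]]]; subst;
    [pose proof (Q1 p2 Hp2) | pose proof (Q2 p2 Hp2) | pose proof (Q3 p1 Hp1) | pose proof (Q4 p1 Hp1)];
    unfold Rmin in *; repeat destruct (Rle_dec _ _); lra.
Qed.

Lemma cell_exists p : M0 p -> exists m, cell m p.
Proof.
  destruct p as [p1 p2]. unfold M0, in_unit, cell; simpl. intros [H1 [H2 H3]].
  destruct (Rle_dec (3*p1) 1), (Rle_dec (3*p1) 2), (Rle_dec (3*p2) 1), (Rle_dec (3*p2) 2);
  first [ exists m00; simpl; lra | exists m01; simpl; lra | exists m02; simpl; lra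
        | exists m10; simpl; lra | exists m12; simpl; lra | exists m20; simpl; lra
        | exists m21; simpl; lra | exists m22; simpl; lra | exfalso; lra ].
Qed.

Lemma pick_spec p : M0 p -> cell (pick_cell p) p.
Proof. intros H. unfold pick_cell. apply epsilon_spec. apply cell_exists; auto. Qed.

Definition loc m (p : R * R) := (3 * fst p - mx m, 3 * snd p - my m).

Lemma loc_M0 m p : M0 p -> cell m p -> M0 (loc m p).
Proof.
  destruct p as [p1 p2]. unfold M0, in_unit, cell, loc; simpl. intros [H1 [H2 H3]] [C1 C2].
  pose proof (mx_range m). pose proof (my_range m).
  split; [lra|]. split; [lra|]. destruct H3 as [E|[E|[E|E]]]; subst; lra.
Qed.

Lemma loc_gx m p : gx m (loc m p) = fst p.
Proof. unfold gx, loc; simpl. lra. Qed.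
Lemma loc_gy m p : gy m (loc m p) = snd p.
Proof. unfold gy, loc; simpl. lra. Qed.

Lemma tS_def X p : tS X p = tcls X (pick_cell p, sqS X (loc (pick_cell p) p)).
Proof. reflexivity. Qed.

Lemma tS_any X (HX : is_squams X) p n : M0 p -> cell n p -> tS X p = tcls X (n, sqS X (loc n p)).
Proof.
  intros Hp Hc. rewrite tS_def. apply tcls_eq. apply teq_of_glob.
  apply loc_M0; auto; apply pick_spec; auto. apply loc_M0; auto.
  rewrite !loc_gx; auto. rewrite !loc_gy; auto.
Qed.

Lemma tS_sq2 X (HX : is_squams X) p q : M0 p -> M0 q ->
  Rabs (fst p - fst q) + Rabs (snd p - snd q) <= tdist X (tS X p) (tS X q).
Proof.
  intros Hp Hq. rewrite !tS_def. eapply Rle_trans; [|apply lower_S; auto; apply loc_M0; auto; apply pick_spec; auto].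
  rewrite !loc_gx, !loc_gy. lra.
Qed.

Lemma seg_gen X (HX : is_squams X) p q n : M0 p -> M0 q -> cell n p -> cell n q ->
  tdist X (tS X p) (tS X q) <= Defs.dist X (sqS X (loc n p)) (sqS X (loc n q)) / 3.
Proof. intros. rewrite (tS_any X HX p n), (tS_any X HX q n); auto. apply tdist_cell; auto. Qed.

Lemma seg3 (F : R -> R -> R) :
  (forall x y z, 0 <= x <= 1 -> 0 <= y <= 1 -> 0 <= z <= 1 -> F x z <= F x y + F y z) ->
  (forall j r s, (j = 0 \/ j = 1 \/ j = 2) -> j <= 3 * r <= j + 1 -> j <= 3 * s <= j + 1 -> F r s <= Rabs (s - r)) ->
  forall r s, 0 <= r <= 1 -> 0 <= s <= 1 -> F r s <= Rabs (s - r).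
Proof.
  intros Ht Hs r s Hr Hs'.
  assert (A0 : forall a b, 0 <= 3 * a <= 1 -> 0 <= 3 * b <= 1 -> F a b <= Rabs (b - a)) by (intros; apply (Hs 0); lra).
  assert (A1 : forall a b, 1 <= 3 * a <= 2 -> 1 <= 3 * b <= 2 -> F a b <= Rabs (b - a)) by (intros; apply (Hs 1); lra).
  assert (A2 : forall a b, 2 <= 3 * a <= 3 -> 2 <= 3 * b <= 3 -> F a b <= Rabs (b - a)) by (intros; apply (Hs 2); lra).
  destruct (Rle_dec (3*r) 1), (Rle_dec (3*r) 2), (Rle_dec (3*s) 1), (Rle_dec (3*s) 2);
  try (apply A0; lra); try (apply A1; lra); try (apply A2; lra).
  all: first
   [
     assert (3*r <= 1) by lra; assert (1 <= 3*s <= 2) by lra;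
     pose proof (Ht r (1/3) s ltac:(lra) ltac:(lra) ltac:(lra));
     pose proof (A0 r (1/3) ltac:(lra) ltac:(lra)); pose proof (A1 (1/3) s ltac:(lra) ltac:(lra)); rabs
   | assert (3*r <= 1) by lra; assert (2 <= 3*s) by lra;
     pose proof (Ht r (1/3) s ltac:(lra) ltac:(lra) ltac:(lra));
     pose proof (Ht (1/3) (2/3) s ltac:(lra) ltac:(lra) ltac:(lra));
     pose proof (A0 r (1/3) ltac:(lra) ltac:(lra)); pose proof (A1 (1/3) (2/3) ltac:(lra) ltac:(lra));
     pose proof (A2 (2/3) s ltac:(lra) ltac:(lra)); rabs
   | assert (1 <= 3*r <= 2) by lra; assert (3*s <= 1) by lra;
     pose proof (Ht r (1/3) s ltac:(lra) ltac:(lra) ltac:(lra));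
     pose proof (A1 r (1/3) ltac:(lra) ltac:(lra)); pose proof (A0 (1/3) s ltac:(lra) ltac:(lra)); rabs
   | assert (1 <= 3*r <= 2) by lra; assert (2 <= 3*s) by lra;
     pose proof (Ht r (2/3) s ltac:(lra) ltac:(lra) ltac:(lra));
     pose proof (A1 r (2/3) ltac:(lra) ltac:(lra)); pose proof (A2 (2/3) s ltac:(lra) ltac:(lra)); rabs
   | assert (2 <= 3*r) by lra; assert (1 <= 3*s <= 2) by lra;
     pose proof (Ht r (2/3) s ltac:(lra) ltac:(lra) ltac:(lra));
     pose proof (A2 r (2/3) ltac:(lra) ltac:(lra)); pose proof (A1 (2/3) s ltac:(lra) ltac:(lra)); rabs
   | assert (2 <= 3*r) by lra; assert (3*s <= 1) by lra;
     pose proof (Ht r (2/3) s ltac:(lra) ltac:(lra) ltac:(lra));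
     pose proof (Ht (2/3) (1/3) s ltac:(lra) ltac:(lra) ltac:(lra));
     pose proof (A2 r (2/3) ltac:(lra) ltac:(lra)); pose proof (A1 (2/3) (1/3) ltac:(lra) ltac:(lra));
     pose proof (A0 (1/3) s ltac:(lra) ltac:(lra)); rabs ].
Qed.

Lemma vcell i j : (i = 0 \/ i = 1) -> (j = 0 \/ j = 1 \/ j = 2) -> exists n, mx n = 2 * i /\ my n = j.
Proof.
  intros [-> | ->] [-> | [-> | ->]];
  [exists m00|exists m01|exists m02|exists m20|exists m21|exists m22]; simpl; split; lra.
Qed.
Lemma hcell i j : (i = 0 \/ i = 1) -> (j = 0 \/ j = 1 \/ j = 2) -> exists n, mx n = j /\ my n = 2 * i.
Proof.
  intros [-> | ->] [-> | [-> | ->]];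
  [exists m00|exists m10|exists m20|exists m02|exists m12|exists m22]; simpl; split; lra.
Qed.

Lemma vert_up X (HX : is_squams X) i r s : (i = 0 \/ i = 1) -> in_unit r -> in_unit s ->
  tdist X (tS X (i, r)) (tS X (i, s)) <= Rabs (s - r).
Proof.
  intros Hi Hr Hs. apply (seg3 (fun r s => tdist X (tS X (i, r)) (tS X (i, s)))).
  - intros; apply (tdist_tri X HX).
  - intros j r' s' Hj Hr' Hs'. destruct (vcell i j Hi Hj) as [n [E1 E2]].
    eapply Rle_trans. apply (seg_gen X HX (i, r') (i, s') n).
    + unfold M0, in_unit; simpl; lra.
    + unfold M0, in_unit; simpl; lra.
    + unfold cell; simpl; rewrite E1, E2; lra.
    + unfold cell; simpl; rewrite E1, E2; lra.
    + replace (loc n (i, r')) with (i, 3 * r' - j) by (unfold loc; simpl; rewrite E1, E2; f_equal; lra).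
      replace (loc n (i, s')) with (i, 3 * s' - j) by (unfold loc; simpl; rewrite E1, E2; f_equal; lra).
      rewrite (sq1v X HX) by (auto; unfold in_unit; lra). rabs.
  - unfold in_unit in Hr; lra.
  - unfold in_unit in Hs; lra.
Qed.

Lemma hor_up X (HX : is_squams X) i r s : (i = 0 \/ i = 1) -> in_unit r -> in_unit s ->
  tdist X (tS X (r, i)) (tS X (s, i)) <= Rabs (s - r).
Proof.
  intros Hi Hr Hs. apply (seg3 (fun r s => tdist X (tS X (r, i)) (tS X (s, i)))).
  - intros; apply (tdist_tri X HX).
  - intros j r' s' Hj Hr' Hs'. destruct (hcell i j Hi Hj) as [n [E1 E2]].
    eapply Rle_trans. apply (seg_gen X HX (r', i) (s', i) n).
    + unfold M0, in_unit; simpl; lra.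
    + unfold M0, in_unit; simpl; lra.
    + unfold cell; simpl; rewrite E1, E2; lra.
    + unfold cell; simpl; rewrite E1, E2; lra.
    + replace (loc n (r', i)) with (3 * r' - j, i) by (unfold loc; simpl; rewrite E1, E2; f_equal; lra).
      replace (loc n (s', i)) with (3 * s' - j, i) by (unfold loc; simpl; rewrite E1, E2; f_equal; lra).
      rewrite (sq1h X HX) by (auto; unfold in_unit; lra). rabs.
  - unfold in_unit in Hr; lra.
  - unfold in_unit in Hs; lra.
Qed.

Lemma tdist0_eq X (HX : is_squams X) x y : tdist X x y = 0 -> x = y.
Proof.
  intros H0.
  destruct (cls_mem X x) as [[m x0] Hx]. rewrite (cls_eq X x _ Hx) in *.
  destruct (cls_mem X y) as [[n y0] Hy]. rewrite (cls_eq X y _ Hy) in *.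
  clear x y Hx Hy.
  destruct (classic (n = m /\ y0 = x0)) as [[-> ->]|Hne]; [reflexivity|].
  apply not_and_or in Hne.
  destruct (classic (exists p, M0 p /\ x0 = sqS X p)) as [[p [Hp ->]]|Nx].
  - destruct (classic (exists q, M0 q /\ y0 = sqS X q)) as [[q [Hq ->]]|Ny].
    + pose proof (lower_S X HX m p n q Hp Hq). rewrite H0 in H.
      apply tcls_eq. apply teq_of_glob; auto; rabs.
    + destruct (compact_delta X HX y0) as [d [Hd Hd']].
      { intros p' Hp' E. apply Ny. exists p'; auto. }
      assert (n <> m \/ sqS X p <> y0 -> False).
      { intros Hne'. assert (m <> n \/ sqS X p <> y0).
        { destruct Hne' as [h|h]; [left; intro e; apply h; congruence | right; exact h]. }
        pose proof (lower_nonS X HX n y0 d Hd Hd' m (sqS X p)).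
        rewrite tdist_sym in H1 by auto. assert (0 < 0). rewrite <- H0 at 2. apply H1.
        destruct H; auto. lra. }
      exfalso. apply H. destruct Hne; auto.
  - destruct (compact_delta X HX x0) as [d [Hd Hd']].
    { intros p' Hp' E. apply Nx. exists p'; auto. }
    pose proof (lower_nonS X HX m x0 d Hd Hd' n y0 Hne). lra.
Qed.

Lemma Mtens_squams X : is_squams X -> is_squams (Mtens X).
Proof.
  intros HX. unfold is_squams; simpl.
  assert (M0i : forall i r, (i = 0 \/ i = 1) -> in_unit r -> M0 (i, r) /\ M0 (r, i)).
  { intros i r Hi Hr. unfold M0, in_unit in *; simpl. lra. }
  split; [|split; [|split; [|split]]].
  - split; [|split].
    + intros x y. split. apply tdist0_eq; auto. intros ->; apply tdist_refl; auto.
    + apply tdist_sym; auto.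
    + intros; apply tdist_tri; auto.
  - apply tdist_le2; auto.
  - intros p q Hp Hq E. pose proof (tS_sq2 X HX p q Hp Hq). rewrite E, tdist_refl in H by auto.
    destruct p, q; simpl in *. f_equal; rabs.
  - intros i r s Hi Hr Hs. destruct (M0i i r Hi Hr), (M0i i s Hi Hs). split; apply Rle_antisym.
    + apply vert_up; auto.
    + pose proof (tS_sq2 X HX _ _ H H1). simpl in H3. rabs.
    + apply hor_up; auto.
    + pose proof (tS_sq2 X HX _ _ H0 H2). simpl in H3. rabs.
  - intros p q Hp Hq. apply Rle_ge. apply tS_sq2; auto.
Qed.

Definition fz {X Y : sqraw} (f : car X -> car Y) (z : Mpt * car X) : Mpt * car Y := (fst z, f (snd z)).

Lemma teq_map X Y f : is_mor X Y f -> forall z w, teq X z w -> teq Y (fz f z) (fz f w).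
Proof.
  intros [_ Hf] z w H. induction H as [x y H|x|x y H IH|x y z T1 IH1 T2 IH2].
  - apply rst_step. destruct H as (p&q&H1&H2&H3&H4&H5&H6&H7).
    exists p, q. unfold fz; simpl. rewrite H3, H4, Hf, Hf by auto. tauto.
  - apply rst_refl.
  - apply rst_sym; auto.
  - eapply rst_trans; eauto.
Qed.

Lemma trep_spec X (x : Tcar X) : proj1_sig x (trep X x).
Proof. unfold trep. apply epsilon_spec. apply cls_mem. Qed.

Lemma tcls_trep X (x : Tcar X) : tcls X (trep X x) = x.
Proof. symmetry. apply cls_eq. apply trep_spec. Qed.

Lemma trep_tcls X z : teq X z (trep X (tcls X z)).
Proof. apply (trep_spec X (tcls X z)). Qed.

Lemma Mmap_tcls X Y f : is_mor X Y f -> forall z, Mtens_map X Y f (tcls X z) = tcls Y (fz f z).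
Proof.
  intros Hf z. unfold Mtens_map. apply tcls_eq. apply teq_sym.
  apply (teq_map X Y f Hf z _ (trep_tcls X z)).
Qed.

Lemma chain_map X Y f : is_squams X -> is_squams Y -> is_mor X Y f ->
  forall z w r, chain_cost X z w r -> exists r', r' <= r /\ chain_cost Y (fz f z) (fz f w) r'.
Proof.
  intros HX HY Hf. induction 1 as [z|z w y r H IH|z w y r T H IH].
  - exists 0. split. lra. apply ch_nil.
  - destruct IH as [r' [Hr' Hc]]. exists (d0 Y (fz f z) (fz f w) + r'). split.
    + unfold d0, fz; simpl. destruct (Mpt_eq_dec (fst z) (fst w)).
      destruct Hf as [Hs _]. pose proof (Hs (snd z) (snd w)). lra. lra.
    + apply ch_dist; auto.
  - destruct IH as [r' [Hr' Hc]]. exists r'. split; auto. apply ch_glue with (fz f w); auto.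
    apply teq_map; auto.
Qed.

Lemma Mmap_mor X Y f : is_squams X -> is_squams Y -> is_mor X Y f ->
  is_mor (Mtens X) (Mtens Y) (Mtens_map X Y f).
Proof.
  intros HX HY Hf. split; simpl.
  - intros x y. rewrite <- (tcls_trep X x), <- (tcls_trep X y).
    rewrite !Mmap_tcls by auto. apply tdist_ge; auto. intros z w r Hz Hw Hc.
    destruct (chain_map X Y f HX HY Hf z w r Hc) as [r' [Hr' Hc']].
    eapply Rle_trans; [|exact Hr']. eapply tdist_le; eauto.
    + apply (teq_map X Y f Hf _ _ Hz).
    + apply (teq_map X Y f Hf _ _ Hw).
  - intros p Hp. rewrite !tS_def. rewrite Mmap_tcls by auto. unfold fz; simpl.
    destruct Hf as [_ Hf]. rewrite Hf. reflexivity. apply loc_M0; auto. apply pick_spec; auto.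
Qed.

Definition Wsp (Y C : sqraw) (s0 : R * R -> car Y) : sqraw :=
  SqRaw (car Y * car C)%type
    (fun u v => Rmax (Rmin (3 * Defs.dist Y (fst u) (fst v)) 2) (Defs.dist C (snd u) (snd v)))
    (fun p => (s0 p, sqS C p)).

Lemma Wsp_squams Y C s0 : is_squams Y -> is_squams C ->
  (forall i r s, (i = 0 \/ i = 1) -> in_unit r -> in_unit s ->
     3 * Defs.dist Y (s0 (i, r)) (s0 (i, s)) <= Rabs (s - r) /\
     3 * Defs.dist Y (s0 (r, i)) (s0 (s, i)) <= Rabs (s - r)) ->
  is_squams (Wsp Y C s0).
Proof.
  intros HY HC Hs. unfold is_squams; simpl.
  split; [|split; [|split; [|split]]].
  - split; [|split].
    + intros [x1 x2] [y1 y2]; simpl. split.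
      * intros H. pose proof (d_nonneg Y HY x1 y1). pose proof (d_nonneg C HC x2 y2).
        assert (Defs.dist Y x1 y1 = 0 /\ Defs.dist C x2 y2 = 0) as [E1 E2]
          by (unfold Rmax, Rmin in H; repeat destruct (Rle_dec _ _); lra).
        apply (d_eq0 Y HY) in E1. apply (d_eq0 C HC) in E2. subst; auto.
      * intros E. inversion E; subst. rewrite !d_refl by auto. unfold Rmax, Rmin; repeat destruct (Rle_dec _ _); lra.
    + intros [x1 x2] [y1 y2]; simpl. rewrite (d_sym Y HY x1), (d_sym C HC x2). auto.
    + intros [x1 x2] [y1 y2] [z1 z2]; simpl.
      pose proof (d_tri Y HY x1 y1 z1). pose proof (d_tri C HC x2 y2 z2).
      pose proof (d_nonneg Y HY x1 y1). pose proof (d_nonneg C HC x2 y2).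
      pose proof (d_nonneg Y HY y1 z1). pose proof (d_nonneg C HC y2 z2).
      unfold Rmax, Rmin; repeat destruct (Rle_dec _ _); lra.
  - intros [x1 x2] [y1 y2]; simpl. pose proof (d_le2 C HC x2 y2).
    unfold Rmax, Rmin; repeat destruct (Rle_dec _ _); lra.
  - intros p q Hp Hq E. inversion E. apply (S_inj C HC); auto.
  - intros i r s Hi Hr Hs'. destruct (Hs i r s Hi Hr Hs') as [H1 H2].
    rewrite (sq1v C HC), (sq1h C HC) by auto.
    pose proof (d_nonneg Y HY (s0 (i, r)) (s0 (i, s))). pose proof (d_nonneg Y HY (s0 (r, i)) (s0 (s, i))).
    pose proof (Rabs_pos (s - r)).
    split; unfold Rmax, Rmin; repeat destruct (Rle_dec _ _); lra.
  - intros p q Hp Hq. pose proof (sq2 C HC p q Hp Hq).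
    unfold Rmax, Rmin; repeat destruct (Rle_dec _ _); lra.
Qed.

Section Colim.
Variable A : nat -> sqraw.
Variable a : forall k, car (A k) -> car (A (S k)).
Variable C : sqraw.
Variable c : forall k, car (A k) -> car C.
Hypothesis Hch : is_chain A a.
Hypothesis Hco : is_colimit A a C c.

Lemma HA k : is_squams (A k). Proof. apply Hch. Qed.
Lemma Hak k : is_mor (A k) (A (S k)) (a k). Proof. apply Hch. Qed.
Lemma HC : is_squams C. Proof. apply Hco. Qed.
Lemma Hck k : is_mor (A k) C (c k). Proof. apply Hco. Qed.
Lemma Hcc k x : c (S k) (a k x) = c k x. Proof. apply Hco. Qed.

Lemma cS k p : M0 p -> c k (sqS (A k) p) = sqS C p.
Proof. intros; apply (Hck k); auto. Qed.
Lemma aS k p : M0 p -> a k (sqS (A k) p) = sqS (A (S k)) p.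
Proof. intros; apply (Hak k); auto. Qed.

Definition Icar := {y : car C | exists k x, y = c k x}.
Lemma Iin_pf k (x : car (A k)) : exists k' (x' : car (A k')), c k x = c k' x'.
Proof. exists k, x; reflexivity. Qed.
Definition Iin k (x : car (A k)) : Icar := exist _ (c k x) (Iin_pf k x).
Definition Isp : sqraw := SqRaw Icar (fun u v => Defs.dist C (proj1_sig u) (proj1_sig v))
  (fun p => Iin 0 (sqS (A 0) p)).

Lemma Ieq (u v : Icar) : proj1_sig u = proj1_sig v -> u = v.
Proof. destruct u, v; simpl. intros ->. f_equal. apply proof_irrelevance. Qed.

Lemma Isq : is_squams Isp.
Proof.
  pose proof HC as HC. unfold is_squams; simpl.
  assert (M0i : forall i r, (i = 0 \/ i = 1) -> in_unit r -> M0 (i, r) /\ M0 (r, i)).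
  { intros i r Hi Hr. unfold M0, in_unit in *; simpl. lra. }
  split; [|split; [|split; [|split]]].
  - split; [|split].
    + intros u v. split. intros H. apply Ieq. apply (d_eq0 C HC); auto. intros ->; apply d_refl; auto.
    + intros; apply d_sym; auto.
    + intros; apply d_tri; auto.
  - intros; apply d_le2; auto.
  - intros p q Hp Hq E. apply (f_equal (@proj1_sig _ _)) in E. simpl in E.
    rewrite !cS in E by auto. apply (S_inj C HC); auto.
  - intros i r s Hi Hr Hs. destruct (M0i i r Hi Hr), (M0i i s Hi Hs).
    rewrite !cS by auto. split; [apply sq1v|apply sq1h]; auto.
  - intros p q Hp Hq. rewrite !cS by auto. apply sq2; auto.
Qed.

Lemma jsurj y : exists k x, y = c k x.
Proof.
  destruct Hco as [_ [_ [_ UP]]].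
  set (gI := fun k (x : car (A k)) => Iin k x : car Isp).
  destruct (UP Isp gI Isq) as [u [[Hu1 Hu2] _]].
  - intros k. split.
    + intros x x'. simpl. apply (Hck k).
    + intros p Hp. apply Ieq. simpl. rewrite !cS; auto.
  - intros k x. apply Ieq. simpl. apply Hcc.
  - destruct (UP C c HC Hck Hcc) as [u0 [_ Hu0]].
    assert (E1 : u0 = fun y => y).
    { apply Hu0. split; [split|].
      - intros; apply Rle_refl.
      - auto.
      - auto. }
    assert (E2 : u0 = fun y => proj1_sig (u y)).
    { apply Hu0. split; [split|].
      - intros x1 y1. apply (proj1 Hu1).
      - intros p Hp. rewrite (proj2 Hu1 p Hp). simpl. apply cS; auto.
      - intros k x. rewrite Hu2. reflexivity. }
    assert (proj1_sig (u y) = y).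
    { pose proof (f_equal (fun h => h y) (eq_trans (eq_sym E2) E1)) as E. simpl in E. exact E. }
    destruct (u y) as [y' Hy']. simpl in H. subst y'. auto.
Qed.

Lemma lift_to l : forall k, (k <= l)%nat -> forall x : car (A k), exists x' : car (A l), c l x' = c k x.
Proof.
  induction l; intros k Hk x.
  - assert (k = 0%nat) by lia. subst. exists x; auto.
  - apply Nat.le_succ_r in Hk. destruct Hk as [Hk| ->].
    + destruct (IHl k Hk x) as [x' Hx']. exists (a l x'). rewrite Hcc. auto.
    + exists x; auto.
Qed.

Lemma common x y : exists l x' y', x = c l x' /\ y = c l y'.
Proof.
  destruct (jsurj x) as [k1 [x1 ->]]. destruct (jsurj y) as [k2 [y1 ->]].
  destruct (lift_to (Nat.max k1 k2) k1 (Nat.le_max_l _ _) x1) as [x' Hx'].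
  destruct (lift_to (Nat.max k1 k2) k2 (Nat.le_max_r _ _) y1) as [y' Hy'].
  exists (Nat.max k1 k2), x', y'. auto.
Qed.

Section UPsec.
Variable Y : sqraw.
Variable g : forall k, Tcar (A k) -> car Y.
Hypothesis HY : is_squams Y.
Hypothesis Hg : forall k, is_mor (Mtens (A k)) Y (g k).
Hypothesis Hgc : forall k x, g (S k) (Mtens_map (A k) (A (S k)) (a k) x) = g k x.

Lemma gC m k x : g (S k) (tcls (A (S k)) (m, a k x)) = g k (tcls (A k) (m, x)).
Proof.
  rewrite <- (Hgc k (tcls (A k) (m, x))). f_equal. rewrite Mmap_tcls. reflexivity. apply Hak.
Qed.

Lemma gS m p : M0 p -> forall k, g k (tcls (A k) (m, sqS (A k) p)) = g 0 (tcls (A 0) (m, sqS (A 0) p)).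
Proof.
  intros Hp. induction k. auto. rewrite <- aS by auto. rewrite gC. auto.
Qed.

Lemma g_short k x y : Defs.dist Y (g k x) (g k y) <= tdist (A k) x y.
Proof. apply (proj1 (Hg k)). Qed.

Definition s0 m p := g 0 (tcls (A 0) (m, sqS (A 0) p)).

Definition hk m k (x : car (A k)) : car (Wsp Y C (s0 m)) := (g k (tcls (A k) (m, x)), c k x).

Lemma g_cell k m x y : 3 * Defs.dist Y (g k (tcls (A k) (m, x))) (g k (tcls (A k) (m, y))) <= Defs.dist (A k) x y.
Proof.
  pose proof (g_short k (tcls (A k) (m, x)) (tcls (A k) (m, y))).
  pose proof (tdist_cell (A k) (HA k) m x y). lra.
Qed.

Lemma W_sq m : is_squams (Wsp Y C (s0 m)).
Proof.
  apply Wsp_squams; auto. apply HC.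
  intros i r s Hi Hr Hs. unfold s0. split.
  - pose proof (g_cell 0 m (sqS (A 0) (i, r)) (sqS (A 0) (i, s))). rewrite sq1v in H; auto. apply HA.
  - pose proof (g_cell 0 m (sqS (A 0) (r, i)) (sqS (A 0) (s, i))). rewrite sq1h in H; auto. apply HA.
Qed.

Lemma hk_mor m k : is_mor (A k) (Wsp Y C (s0 m)) (hk m k).
Proof.
  split.
  - intros x y. simpl. pose proof (g_cell k m x y). pose proof (proj1 (Hck k) x y).
    pose proof (d_nonneg _ (HA k) x y).
    unfold Rmax, Rmin; repeat destruct (Rle_dec _ _); lra.
  - intros p Hp. unfold hk; simpl. rewrite gS, cS by auto. reflexivity.
Qed.

Lemma hk_compat m k x : hk m (S k) (a k x) = hk m k x.
Proof. unfold hk. rewrite gC, Hcc. reflexivity. Qed.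

Lemma Fm_ex m : exists f : car C -> car Y,
  (forall k x, f (c k x) = g k (tcls (A k) (m, x))) /\
  (forall p, M0 p -> f (sqS C p) = s0 m p) /\
  (forall x y, Defs.dist Y (f x) (f y) <= Defs.dist C x y / 3).
Proof.
  destruct Hco as [_ [_ [_ UP]]].
  destruct (UP _ (hk m) (W_sq m) (hk_mor m) (hk_compat m)) as [u [[[Hu1 Hu2] Hu3] _]].
  exists (fun y => fst (u y)). split; [|split].
  - intros k x. rewrite Hu3. reflexivity.
  - intros p Hp. rewrite Hu2 by auto. reflexivity.
  - intros x y. pose proof (Hu1 x y). simpl in H.
    destruct (common x y) as [l [x' [y' [-> ->]]]].
    rewrite !Hu3 in *. simpl in *.
    pose proof (g_cell l m x' y'). pose proof (d_le2 _ (HA l) x' y').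
    unfold Rmax, Rmin in H; repeat destruct (Rle_dec _ _); lra.
Qed.

Lemma UP_part : exists! u : car (Mtens C) -> car Y,
  is_mor (Mtens C) Y u /\ (forall k x, u (Mtens_map (A k) C (c k) x) = g k x).
Proof.
  pose (F := fun m => proj1_sig (constructive_indefinite_description _ (Fm_ex m))).
  assert (HF : forall m, (forall k x, F m (c k x) = g k (tcls (A k) (m, x))) /\
     (forall p, M0 p -> F m (sqS C p) = s0 m p) /\
     (forall x y, Defs.dist Y (F m x) (F m y) <= Defs.dist C x y / 3)).
  { intros m. exact (proj2_sig (constructive_indefinite_description _ (Fm_ex m))). }
  clearbody F.
  pose (FF := fun z : Mpt * car C => F (fst z) (snd z)).
  assert (FFt : forall z w, teq C z w -> FF z = FF w).
  { induction 1 as [x y H|x|x y H IH|x y z T1 IH1 T2 IH2]; auto; try congruence.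
    destruct H as (p&q&H1&H2&H3&H4&H5&H6&H7). unfold FF. rewrite H3, H4.
    rewrite (proj1 (proj2 (HF _))), (proj1 (proj2 (HF _))) by auto. unfold s0. f_equal.
    apply tcls_eq. apply rst_step. apply gen_mk; auto. }
  pose (u := fun xi : Tcar C => FF (trep C xi)).
  assert (Hut : forall z, u (tcls C z) = FF z).
  { intros z. unfold u. symmetry. apply FFt. apply trep_tcls. }
  assert (Hchain : forall z w r, chain_cost C z w r -> Defs.dist Y (FF z) (FF w) <= r).
  { induction 1 as [z|z w y r H IH|z w y r T H IH].
    - rewrite d_refl by auto. lra.
    - pose proof (d_tri Y HY (FF z) (FF w) (FF y)).
      assert (Defs.dist Y (FF z) (FF w) <= d0 C z w).
      { unfold d0, FF. destruct (Mpt_eq_dec (fst z) (fst w)) as [e|]. rewrite e. apply HF.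
        apply d_le2; auto. }
      lra.
    - rewrite (FFt _ _ T). auto. }
  exists u. split; [split; [split|]|].
  - intros x y. simpl. rewrite <- (tcls_trep C x), <- (tcls_trep C y). rewrite !Hut.
    apply tdist_ge. apply HC. intros z w r Hz Hw Hc.
    rewrite (FFt _ _ Hz), (FFt _ _ Hw). auto.
  - intros p Hp. simpl. rewrite tS_def, Hut. unfold FF; simpl.
    rewrite (proj1 (proj2 (HF _))). unfold s0. rewrite <- tS_def. apply (Hg 0); auto.
    apply loc_M0; auto. apply pick_spec; auto.
  - intros k x. rewrite <- (tcls_trep _ x). rewrite Mmap_tcls, Hut by apply Hck.
    unfold FF, fz; simpl. rewrite (proj1 (HF _)). destruct (trep (A k) x); reflexivity.
  - intros v [_ Hv]. apply functional_extensionality. intros xi.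
    rewrite <- (tcls_trep C xi). destruct (trep C xi) as [m y].
    destruct (jsurj y) as [k [x ->]].
    assert (E : tcls C (m, c k x) = Mtens_map (A k) C (c k) (tcls (A k) (m, x))).
    { rewrite Mmap_tcls. reflexivity. apply Hck. }
    rewrite E, Hv. rewrite <- E, Hut. unfold FF; simpl. rewrite (proj1 (HF _)). reflexivity.
Qed.
End UPsec.
End Colim.

Theorem mainTheorem15 (A : nat -> sqraw) (a : forall k, car (A k) -> car (A (S k)))
    (C : sqraw) (c : forall k, car (A k) -> car C) :
  is_chain A a ->
  is_colimit A a C c ->
  is_colimit (fun k => Mtens (A k)) (fun k => Mtens_map (A k) (A (S k)) (a k))
             (Mtens C) (fun k => Mtens_map (A k) C (c k)).
Proof.
  intros Hch Hco. split; [|split; [|split]].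
  - apply Mtens_squams. apply (HC A a C c Hco).
  - intros k. apply Mmap_mor. apply (HA A a Hch). apply (HC A a C c Hco). apply (Hck A a C c Hco).
  - intros k x. rewrite <- (tcls_trep _ x).
    rewrite (Mmap_tcls _ _ (a k)) by apply (Hak A a Hch).
    rewrite !Mmap_tcls by apply (Hck A a C c Hco).
    unfold fz; simpl. rewrite (Hcc A a C c Hco). reflexivity.
  - intros Y g HY Hg Hgc. apply (UP_part A a C c Hch Hco Y g HY Hg Hgc).
Qed.
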